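(* Every cograph has an hc-coloring.
   Context: All graphs are finite, simple and undirected. A (proper vertex) coloring of $G=(V,E)$ is a surjective map $\sigma:V\to S$ with $\sigma(x)\neq\sigma(y)$ whenever $xy\in E$. A cograph is a graph that is $K_1$, or a disjoint union of cographs, or a join of cographs. A cotree $(T,t)$ of a cograph $G$ is a rooted tree $T$ with leaf set $V$ and a labeling $t:V^0(T)\to\{0,1\}$ of its inner vertices such that for every inner vertex $u$, $G(u):=G[L(T(u))]$ (with $L(T(u))$ the leaves descending from $u$) is the disjoint union (if $t(u)=0$) or the join (if $t(u)=1$) of the graphs $G(v)$, $v$ a child of $u$. It is binary if every inner vertex has exactly two children. A coloring $\sigma$ is an hc-coloring with respect to a binary cotree $(T,t)$ if for every inner vertex $u$ with children $v_1,v_2$: if $t(u)=1$ then $\sigma(L(T(v_1)))\cap\sigma(L(T(v_2)))=\emptyset$, and if $t(u)=0$ then one of $\sigma(L(T(v_1)))$, $\sigma(L(T(v_2)))$ contains the other. A coloring of a cograph $G$ is an hc-coloring of $G$ if it is an hc-coloring with respect to some binary cotree of $G$. *)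

(* Defs.v *)
(* A simple graph is a symmetric irreflexive relation e on a finType V. *)
From mathcomp Require Import all_boot.
Set Implicit Arguments. Unset Strict Implicit. Unset Printing Implicit Defensive.

Section Cographs.
Variable V : finType.
Variable e : rel V.

Inductive cograph_set : {set V} -> Prop :=
| cograph_K1 (x : V) : cograph_set [set x]
| cograph_union (B C : {set V}) :
    [disjoint B & C] -> cograph_set B -> cograph_set C ->
    (forall x y, x \in B -> y \in C -> ~~ e x y) ->
    cograph_set (B :|: C)
| cograph_join (B C : {set V}) :
    [disjoint B & C] -> cograph_set B -> cograph_set C ->
    (forall x y, x \in B -> y \in C -> e x y) ->
    cograph_set (B :|: C).

Definition is_cograph : Prop := cograph_set [set: V].

(* Binary rooted trees with leaves labelled by vertices and inner vertices
   labelled by a bool (false = 0 = disjoint union, true = 1 = join). *)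
Inductive btree : Type :=
| Leaf of V
| Node of bool & btree & btree.

Fixpoint leaves (t : btree) : seq V :=
  match t with
  | Leaf v => [:: v]
  | Node _ l r => leaves l ++ leaves r
  end.

Fixpoint cotree_ok (t : btree) : Prop :=
  match t with
  | Leaf _ => True
  | Node b l r =>
      (forall x y, x \in leaves l -> y \in leaves r -> e x y = b)
      /\ cotree_ok l /\ cotree_ok r
  end.

Definition binary_cotree (t : btree) : Prop :=
  uniq (leaves t) /\ (forall v : V, v \in leaves t) /\ cotree_ok t.

Definition coloring (S : eqType) (sigma : V -> S) : Prop :=
  (forall s : S, exists x, sigma x = s) /\
  (forall x y, e x y -> sigma x != sigma y).

Fixpoint hc_wrt (S : eqType) (sigma : V -> S) (t : btree) : Prop :=
  match t with
  | Leaf _ => True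
  | Node b l r =>
      (if b then
         (forall x y, x \in leaves l -> y \in leaves r -> sigma x != sigma y)
       else
         {subset map sigma (leaves l) <= map sigma (leaves r)} \/
         {subset map sigma (leaves r) <= map sigma (leaves l)})
      /\ hc_wrt sigma l /\ hc_wrt sigma r
  end.

Definition hc_coloring (S : eqType) (sigma : V -> S) : Prop :=
  coloring sigma /\ exists t, binary_cotree t /\ hc_wrt sigma t.

End Cographs.

(* Main.v *)
Require Import Defs.
From mathcomp Require Import all_boot.
Set Implicit Arguments. Unset Strict Implicit. Unset Printing Implicit Defensive.

Section Help.
Variable V : finType.
Variable e : rel V.

Fixpoint kk (t : btree V) : nat :=
  match t with
  | Leaf _ => 1
  | Node b l r => if b then kk l + kk r else maxn (kk l) (kk r)
  end.

Fixpoint col (t : btree V) : V -> nat :=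
  match t with
  | Leaf _ => fun _ => 0
  | Node b l r => fun x => if x \in leaves l then col l x
                           else (if b then kk l else 0) + col r x
  end.

Lemma col_lt t x : col t x < kk t.
Proof.
elim: t x => [v|b l IHl r IHr] x //=.
case: ifP => _; case: b.
- by apply: leq_trans (IHl x) (leq_addr _ _).
- by apply: leq_trans (IHl x) (leq_maxl _ _).
- by rewrite ltn_add2l.
- by apply: leq_trans (IHr x) (leq_maxr _ _).
Qed.


Lemma col_surj t c : uniq (leaves t) -> c < kk t ->
  exists2 x, x \in leaves t & col t x = c.
Proof.
elim: t c => [v|b l IHl r IHr] c /=.
  by rewrite ltnS leqn0 => _ /eqP ->; exists v; rewrite ?inE.
rewrite cat_uniq => /and3P [ul dis ur] hc.
have inr y : y \in leaves r -> y \notin leaves l.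
  by move=> yr; apply/negP => yl; move/hasPn: dis => /(_ y yr); rewrite yl.
case: (ltnP c (kk l)) => hcl.
  have [x xl <-] := IHl c ul hcl.
  by exists x; rewrite ?mem_cat ?xl // xl.
case: b hc => hc.
  have hc' : c - kk l < kk r by rewrite ltn_subLR // addnC.
  have [x xr hx] := IHr (c - kk l) ur hc'.
  exists x; first by rewrite mem_cat xr orbT.
  by rewrite (negbTE (inr x xr)) hx subnKC.
have hcr : c < kk r.
  by move: hc; rewrite leq_max ltnNge hcl.
have [x xr hx] := IHr c ur hcr.
exists x; first by rewrite mem_cat xr orbT.
by rewrite (negbTE (inr x xr)) hx.
Qed.

Lemma col_proper t : symmetric e -> irreflexive e -> cotree_ok e t ->
  uniq (leaves t) ->
  forall x y, x \in leaves t -> y \in leaves t -> e x y -> col t x != col t y.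
Proof.
move=> sym irr; elim: t => [v|b l IHl r IHr] /=.
  by move=> _ _ x y; rewrite !inE => /eqP -> /eqP ->; rewrite irr.
move=> [ok [okl okr]]; rewrite cat_uniq => /and3P [ul dis ur].
have inr y : y \in leaves r -> y \notin leaves l.
  by move=> yr; apply/negP => yl; move/hasPn: dis => /(_ y yr); rewrite yl.
move=> x y; rewrite !mem_cat => + + exy.
case xl: (x \in leaves l); case yl: (y \in leaves l) => /= hx hy.
- exact: IHl.
- move: hy => yr.
  case: b ok => ok.
    rewrite ltn_eqF //; apply: leq_trans (col_lt _ _) (leq_addr _ _).
  by move: (ok x y xl yr); rewrite exy.
- move: hx => xr.
  case: b ok => ok.
    rewrite eq_sym; rewrite ltn_eqF //; apply: leq_trans (col_lt _ _) (leq_addr _ _).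
  by move: (ok y x yl xr); rewrite sym exy.
- move: hx hy => xr yr.
  by rewrite eqn_add2l; apply: IHr.
Qed.

Lemma hc_map t (S1 S2 : eqType) (s1 : V -> S1) (s2 : V -> S2) (f : S1 -> S2) :
  injective f -> {in leaves t, forall x, s2 x = f (s1 x)} ->
  hc_wrt s1 t -> hc_wrt s2 t.
Proof.
move=> finj; elim: t => [v|b l IHl r IHr] //= hs [h [hl hr]].
have hsl : {in leaves l, forall x, s2 x = f (s1 x)}.
  by move=> x xl; apply: hs; rewrite mem_cat xl.
have hsr : {in leaves r, forall x, s2 x = f (s1 x)}.
  by move=> x xr; apply: hs; rewrite mem_cat xr orbT.
split; last by split; [apply: IHl | apply: IHr].
have ml : map s2 (leaves l) = map f (map s1 (leaves l)).
  by rewrite -map_comp; apply/eq_in_map.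
have mr : map s2 (leaves r) = map f (map s1 (leaves r)).
  by rewrite -map_comp; apply/eq_in_map.
rewrite ml mr.
case: b h => h.
  move=> x y xl yr; rewrite hsl // hsr //.
  by apply: contra (h x y xl yr) => /eqP /finj ->.
by case: h => h; [left|right] => z /mapP [w wi ->]; apply: map_f; apply: h.
Qed.

Lemma hc_unmap t (S1 S2 : eqType) (s1 : V -> S1) (s2 : V -> S2) (f : S2 -> S1) :
  injective f -> {in leaves t, forall x, s1 x = f (s2 x)} ->
  hc_wrt s1 t -> hc_wrt s2 t.
Proof.
move=> finj; elim: t => [v|b l IHl r IHr] //= hs [h [hl hr]].
have hsl : {in leaves l, forall x, s1 x = f (s2 x)}.
  by move=> x xl; apply: hs; rewrite mem_cat xl.
have hsr : {in leaves r, forall x, s1 x = f (s2 x)}.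
  by move=> x xr; apply: hs; rewrite mem_cat xr orbT.
split; last by split; [apply: IHl | apply: IHr].
have ml : map s1 (leaves l) = map f (map s2 (leaves l)).
  by rewrite -map_comp; apply/eq_in_map.
have mr : map s1 (leaves r) = map f (map s2 (leaves r)).
  by rewrite -map_comp; apply/eq_in_map.
rewrite ml mr in h.
case: b h => h.
  move=> x y xl yr; move: (h x y xl yr); rewrite hsl // hsr //.
  by apply: contra => /eqP ->.
by case: h => h; [left|right] => z zi;
  rewrite -(mem_map finj); apply: h; rewrite mem_map.
Qed.

Lemma hc_col t : uniq (leaves t) -> hc_wrt (col t) t.
Proof.
elim: t => [v|b l IHl r IHr] //=.
rewrite cat_uniq => /and3P [ul dis ur].
have inr y : y \in leaves r -> y \notin leaves l.
  by move=> yr; apply/negP => yl; move/hasPn: dis => /(_ y yr); rewrite yl.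
have hsl : {in leaves l, forall x, col (Node b l r) x = id (col l x)}.
  by move=> x /= ->.
have hsr : {in leaves r, forall x,
   col (Node b l r) x = addn (if b then kk l else 0) (col r x)}.
  by move=> x /= /inr /negbTE ->.
split; last first.
  split; [apply: (hc_map (f := id)) hsl (IHl ul) => //|].
  by apply: (hc_map (f := addn (if b then kk l else 0))) hsr (IHr ur) => // ?? /addnI.
case: b hsl hsr => hsl hsr /=.
  move=> x y xl yr; rewrite (negbTE (inr y yr)) xl.
  by rewrite ltn_eqF //; apply: leq_trans (col_lt _ _) (leq_addr _ _).
have ml : map (col (Node false l r)) (leaves l) = map (col l) (leaves l).
  by apply/eq_in_map.
have mr : map (col (Node false l r)) (leaves r) = map (col r) (leaves r).
  by apply/eq_in_map.
rewrite /= in ml mr; rewrite ml mr.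
have sub (t1 t2 : btree V) : uniq (leaves t2) -> kk t1 <= kk t2 ->
    {subset map (col t1) (leaves t1) <= map (col t2) (leaves t2)}.
  move=> u2 le z /mapP [w _ ->].
  have [y yi <-] := col_surj u2 (leq_trans (col_lt t1 w) le).
  exact: map_f.
case: (leqP (kk l) (kk r)) => hk; first by left; apply: sub.
by right; apply: sub => //; apply: ltnW.
Qed.

Lemma cotree_of A : cograph_set e A ->
  exists t, [/\ uniq (leaves t), forall v, (v \in leaves t) = (v \in A)
             & cotree_ok e t].
Proof.
elim => [x|B C dis _ [tB [uB mB oB]] _ [tC [uC mC oC]] h
           |B C dis _ [tB [uB mB oB]] _ [tC [uC mC oC]] h].
- by exists (Leaf x); split => // v; rewrite !inE.
- exists (Node false tB tC); split => /=.
  + rewrite cat_uniq uB uC andbT /=; apply/hasPn => y; rewrite mC mB => yC.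
    by apply/negP => yB; move/disjointFr: dis => /(_ y yB); rewrite yC.
  + by move=> v; rewrite mem_cat inE mB mC.
  + split; last by [].
    by move=> x y; rewrite mB mC => xB yC; apply/negbTE/h.
- exists (Node true tB tC); split => /=.
  + rewrite cat_uniq uB uC andbT /=; apply/hasPn => y; rewrite mC mB => yC.
    by apply/negP => yB; move/disjointFr: dis => /(_ y yB); rewrite yC.
  + by move=> v; rewrite mem_cat inE mB mC.
  + split; last by [].
    by move=> x y; rewrite mB mC => xB yC; apply: h.
Qed.

End Help.

Theorem corollary6 (V : finType) (e : rel V) :
  symmetric e -> irreflexive e -> is_cograph e ->
  exists (S : eqType) (sigma : V -> S), hc_coloring e sigma.
Proof.
move=> sym irr /cotree_of [t [ut mt ot]].
have allt v : v \in leaves t by rewrite mt inE.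
pose sigma (x : V) : 'I_(kk t) := Ordinal (col_lt t x).
exists 'I_(kk t), sigma; split.
  split.
    move=> s; have [x _ hx] := col_surj ut (ltn_ord s).
    by exists x; apply: val_inj.
  move=> x y exy; rewrite -val_eqE /=.
  exact: col_proper sym irr ot ut x y (allt x) (allt y) exy.
exists t; split; first by split.
apply: (hc_unmap (s1 := col t) (f := val)) (hc_col ut) => //.
exact: val_inj.
Qed.
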